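(* For every pair of integers $r,k\geq2$ with $(r,k)\neq(2,2)$, $$\frac{k\,p_{r,k}(k)\cdot\alpha}{r\beta}=\frac{1}{(r-1)(k-1)}.$$
   Context: $f_t(\mu)=e^{-\mu}\sum_{i\geq t}\mu^i/i!$. $\mu_{r,k}$ is the unique minimizer over $\mu>0$ of $\mu/f_{k-1}(\mu)^{r-1}$. $\alpha=f_k(\mu_{r,k})$, $\beta=\frac1r\mu_{r,k}f_{k-1}(\mu_{r,k})$, and $p_{r,k}(k)=e^{-\mu_{r,k}}\frac{\mu_{r,k}^k}{f_k(\mu_{r,k})\,k!}$. *)

(* Defs.v *)
From Stdlib Require Import Reals Lra Lia.
From Coquelicot Require Import Coquelicot.
Open Scope R_scope.

Definition ftail (t : nat) (mu : R) : R :=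
  exp (- mu) * Series (fun i : nat => if (t <=? i)%nat then mu ^ i / INR (Factorial.fact i) else 0).

Definition obj (r k : nat) (mu : R) : R := mu / (ftail (k - 1) mu) ^ (r - 1).

(* mu is a minimizer over mu > 0 of the objective (mu_{r,k} is the unique one) *)
Definition is_mu_rk (r k : nat) (mu : R) : Prop :=
  0 < mu /\ forall x : R, 0 < x -> obj r k mu <= obj r k x.

Definition alpha_rk (k : nat) (mu : R) : R := ftail k mu.
Definition beta_rk (r k : nat) (mu : R) : R := / INR r * mu * ftail (k - 1) mu.
Definition p_rk_k (k : nat) (mu : R) : R :=
  exp (- mu) * mu ^ k / (ftail k mu * INR (Factorial.fact k)).

(* Main.v *)
Require Import Defs.
From Stdlib Require Import Reals Lra Lia.
From Coquelicot Require Import Coquelicot.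
Open Scope R_scope.

Definition aa (x : R) (n : nat) : R := x ^ n / INR (Factorial.fact n).
Definition tl (t : nat) (x : R) (n : nat) : R :=
  if (t <=? n)%nat then x ^ n / INR (Factorial.fact n) else 0.

Lemma full x : is_series (aa x) (exp x).
Proof.
  generalize (is_exp_Reals x); unfold is_pseries. apply is_series_ext.
  intro n. rewrite pow_n_pow. unfold aa. reflexivity.
Qed.

Lemma val (a : nat -> R) l l' : is_series a l -> l = l' -> is_series a l'.
Proof. intros; subst; auto. Qed.

Lemma L1 t x : (0 < t)%nat -> is_series (tl t x) (exp x - sum_n (aa x) (pred t)).
Proof.
  intro Ht. apply (is_series_decr_n _ t); auto.
  assert (E : sum_n (tl t x) (pred t) = 0).
  { rewrite (sum_n_ext_loc _ (fun _ => 0)). rewrite sum_n_const. apply Rmult_0_r.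
    intros n Hn. unfold tl. destruct (Nat.leb_spec t n); [lia|reflexivity]. }
  assert (H : is_series (fun k => tl t x (t + k)) (exp x - sum_n (aa x) (pred t))).
  { apply (is_series_ext (fun k => aa x (t + k))).
  { intro n. unfold tl, aa. destruct (Nat.leb_spec t (t+n)); [reflexivity|lia]. }
  apply (is_series_incr_n (aa x)); auto.
  apply (val _ (exp x)). apply full.
  unfold plus; simpl. rewrite Rplus_comm, Rplus_minus. reflexivity. }
  eapply is_series_ext; [intro; reflexivity|].
  apply (val _ _ _ H).
  unfold plus, opp; simpl. rewrite (sum_n_ext_loc (tl t x) (fun _ => 0)), sum_n_const.
  rewrite Rmult_0_r, Ropp_0, Rplus_0_r. reflexivity.
  intros n Hn. unfold tl. destruct (Nat.leb_spec t n); [lia|reflexivity].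
Qed.

Lemma ftail_eq t x : (0 < t)%nat -> ftail t x = 1 - exp (-x) * sum_n (aa x) (pred t).
Proof.
  intro Ht. unfold ftail. change (fun i : nat => _) with (tl t x).
  rewrite (is_series_unique _ _ (L1 t x Ht)).
  assert (E : exp (-x) * exp x = 1).
  { rewrite <- exp_plus. replace (-x + x) with 0 by ring. now rewrite exp_0. }
  assert (G : forall s : R, exp (-x) * (exp x - s) = 1 - exp (-x) * s).
  { intro s. rewrite Rmult_minus_distr_l, E. reflexivity. }
  apply G.
Qed.

Lemma aa_pos x n : 0 < x -> 0 < aa x n.
Proof.
  intro. unfold aa. apply Rdiv_lt_0_compat. now apply pow_lt.
  apply lt_0_INR, Factorial.lt_O_fact.
Qed.

Lemma Series0 : Series (fun _ : nat => 0) = 0.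
Proof.
  rewrite (Series_ext _ (fun n => 0 * (fun _ => 1) n)).
  rewrite Series_scal_l. ring. intros; simpl; ring.
Qed.

Lemma ftail_pos t x : (0 < t)%nat -> 0 < x -> 0 < ftail t x.
Proof.
  intros Ht Hx. unfold ftail. change (fun i : nat => _) with (tl t x).
  apply Rmult_lt_0_compat. apply exp_pos.
  rewrite (is_series_unique _ _ (L1 t x Ht)).
  assert (H1 := L1 (S t) x ltac:(lia)).
  assert (H2 : 0 <= Series (tl (S t) x)).
  { rewrite <- Series0. apply Series_le. intro n. split. lra.
    unfold tl. destruct (S t <=? n)%nat. left; apply aa_pos; auto. lra.
    eexists; eauto. }
  rewrite (is_series_unique _ _ H1) in H2. simpl pred in H2.
  destruct t as [|t']; [lia|]. simpl pred. rewrite sum_Sn in H2.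
  unfold plus in H2; simpl in H2. generalize (aa_pos x (S t') Hx). lra.
Qed.

Lemma dval (f : R -> R) x l l' : is_derive f x l -> l = l' -> is_derive f x l'.
Proof. intros; subst; auto. Qed.

Lemma Dmono m (x : R) : is_derive (fun y => exp (-y) * (y ^ (S m) / INR (Factorial.fact (S m)))) x
      (exp (-x) * (INR (S m) * x ^ m - x ^ (S m)) / INR (Factorial.fact (S m))).
Proof.
  assert (Hf : INR (Factorial.fact (S m)) <> 0) by apply not_0_INR, Factorial.fact_neq_0.
  set (c := INR (Factorial.fact (S m))) in *.
  auto_derive; auto. simpl. field. auto.
Qed.

Lemma Dsum m (x : R) : is_derive (fun y => exp (-y) * sum_n (aa y) m) x (- exp (-x) * aa x m).
Proof.
  induction m.
  - apply (is_derive_ext (fun y => exp (-y) * (y ^ 0 / INR (Factorial.fact 0)))).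
    intro; rewrite sum_O; reflexivity.
    auto_derive; auto. unfold aa. simpl. field.
  - apply (is_derive_ext (fun y => exp (-y) * sum_n (aa y) m + exp (-y) * (y ^ (S m) / INR (Factorial.fact (S m))))).
    intro; rewrite sum_Sn; symmetry; apply Rmult_plus_distr_l.
    assert (H2 := Dmono m x).
    apply (dval _ _ _ _ (is_derive_plus _ _ _ _ _ IHm H2)).
    assert (K : (- exp(-x)*aa x m) + (exp (-x) * (INR (S m) * x^m - x^(S m)) / INR(Factorial.fact (S m))) = - exp(-x)*aa x (S m)).
    { unfold aa. rewrite (fact_simpl m), mult_INR. 
      assert (INR (Factorial.fact m) <> 0) by apply not_0_INR, Factorial.fact_neq_0.
      assert (INR (S m) <> 0) by (apply not_0_INR; lia).
      simpl pow. field. auto. }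
    exact K.
Qed.

Lemma Gder k' (mu : R) : is_derive (fun y => ftail (S k') y) mu (exp (-mu) * aa mu k').
Proof.
  apply (is_derive_ext (fun y => 1 - exp (-y) * sum_n (aa y) k')).
  intro; rewrite ftail_eq by lia; reflexivity.
  pose proof (is_derive_minus (fun _ => 1) (fun y => exp (-y) * sum_n (aa y) k') mu _ _ (is_derive_const 1 mu) (Dsum k' mu)) as H.
  apply (dval _ _ _ _ H).
  unfold minus, plus, opp, zero; simpl. ring.
Qed.

Theorem lemma40 (r k : nat) (hr : (2 <= r)%nat) (hk : (2 <= k)%nat)
  (hrk : ~ (r = 2%nat /\ k = 2%nat)) (mu : R) (hmu : is_mu_rk r k mu) :
  INR k * p_rk_k k mu * alpha_rk k mu / (INR r * beta_rk r k mu)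
  = 1 / ((INR r - 1) * (INR k - 1)).
Proof.
  destruct r as [|[|r']]; [lia|lia|]. destruct k as [|[|k']]; [lia|lia|].
  clear hr hk hrk. destruct hmu as [Hmu Hmin].
  set (G0 := ftail (S k') mu).
  assert (HG0 : 0 < G0) by (apply ftail_pos; lia || auto).
  assert (HA : 0 < ftail (S (S k')) mu) by (apply ftail_pos; lia || auto).
  set (D := exp (-mu) * aa mu k').
  assert (HD1 := is_derive_pow _ (S r') mu _ (Gder k' mu)).
  assert (HD2 := is_derive_inv _ _ _ HD1 ltac:(apply pow_nonzero; fold G0; lra)).
  assert (HD3 := is_derive_mult (fun y => y) _ mu _ _ (is_derive_id mu) HD2 Rmult_comm).
  assert (HD4 : is_derive (obj (S (S r')) (S (S k'))) mu
     (1 * / G0 ^ S r' + mu * (- (INR (S r') * D * G0 ^ r') / (G0 ^ S r') ^ 2))).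
  { apply (is_derive_ext _ _ _ _ (fun t => eq_refl)) in HD3.
    unfold obj. simpl Nat.sub. exact HD3. }
  apply is_derive_Reals in HD4.
  assert (HL := deriv_minimum (obj (S (S r')) (S (S k'))) 0 (mu + 1) mu (exist _ _ HD4) Hmu ltac:(lra)
    ltac:(intros; apply Hmin; lra)).
  rewrite (derive_pt_eq_0 _ _ _ _ HD4) in HL.
  assert (Hpn : G0 ^ r' <> 0) by (apply pow_nonzero; lra).
  assert (Hkey : G0 = mu * INR (S r') * D).
  { assert (E : G0 - mu * INR (S r') * D =
      (1 * / G0 ^ S r' + mu * (- (INR (S r') * D * G0 ^ r') / (G0 ^ S r') ^ 2)) * ((G0 ^ S r') ^ 2 / G0 ^ r')).
    { simpl pow. field. split; lra. }
    rewrite HL in E. lra. }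
  unfold p_rk_k, alpha_rk, beta_rk. simpl Nat.sub.
  fold G0. rewrite Hkey. unfold D, aa.
  rewrite (fact_simpl (S k')), (fact_simpl k'), !mult_INR.
  assert (INR (Factorial.fact k') <> 0) by apply not_0_INR, Factorial.fact_neq_0.
  assert (exp (-mu) <> 0) by (generalize (exp_pos (-mu)); lra).
  rewrite !S_INR. simpl pow.
  assert (0 <= INR r') by apply pos_INR. assert (0 <= INR k') by apply pos_INR.
  field. repeat split; try lra. apply pow_nonzero; lra.
Qed.
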